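(* Let $F$ be an Archimedean vector lattice endowed with the uniform convergence and let $E$ be a majorizing sublattice of $F$. Then every $f\in\overline{E}^{1}_{+}$ is the uniform limit (and the supremum) of an increasing sequence in $E\cap[0_F,f]$; consequently $\overline{E}^{1}_{+}$ consists exactly of the uniform limits of increasing sequences in $E_+$. Moreover, $E$ is super order dense in $\overline{E}$, i.e. for every $f\in\overline{E}_{+}$ there is a countable $G\subset E$ with $f=\bigvee G$ (supremum in $\overline E$).
   Context: For $e\in F_+$, $F_e=\bigcup_{\lambda\ge0}\lambda[-e,e]$ with norm $\|f\|_e=\inf\{\lambda\ge0:|f|\le\lambda e\}$. A net $(f_\alpha)$ converges uniformly to $f$ if there is $e\in F_+$ with $f\in F_e$ and, for every $\varepsilon>0$, eventually $\|f_\alpha-f\|_e\le\varepsilon$. $\overline{E}^1$ (adherence) is the set of uniform limits of nets in $E$; a set is closed if it equals its adherence; $\overline E$ is the intersection of all closed sets containing $E$; for a set $A$, $A_+=A\cap F_+$. A sublattice $E$ is majorizing if for every $f\in F_+$ there is $e\in E$ with $f\le e$. *)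

(* Defs.v *)
From mathcomp Require Import all_boot all_order all_algebra.
From mathcomp Require Import boolp classical_sets cardinality reals.
Set Implicit Arguments. Unset Strict Implicit. Unset Printing Implicit Defensive.
Import Order.TTheory GRing.Theory Num.Theory.
Local Open Scope classical_set_scope.
Local Open Scope ring_scope.

Record vector_lattice (R : realType) (F : lmodType R) := VectorLattice {
  vle : F -> F -> Prop;
  vjoin : F -> F -> F;
  vmeet : F -> F -> F;
  vle_refl : forall x, vle x x;
  vle_anti : forall x y, vle x y -> vle y x -> x = y;
  vle_trans : forall x y z, vle x y -> vle y z -> vle x z;
  vjoin_ubl : forall x y, vle x (vjoin x y);
  vjoin_ubr : forall x y, vle y (vjoin x y);
  vjoin_least : forall x y z, vle x z -> vle y z -> vle (vjoin x y) z;
  vmeet_lbl : forall x y, vle (vmeet x y) x;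
  vmeet_lbr : forall x y, vle (vmeet x y) y;
  vmeet_greatest : forall x y z, vle z x -> vle z y -> vle z (vmeet x y);
  vle_add : forall x y z, vle x y -> vle (x + z) (y + z);
  vle_scale : forall (a : R) x, 0 <= a -> vle 0 x -> vle 0 (a *: x)
}.

Section VL.
Variables (R : realType) (F : lmodType R) (L : vector_lattice F).

Local Notation "x <=v y" := (vle L x y) (at level 70).

Definition vabs (f : F) : F := vjoin L f (- f).

Definition archimedean_vl : Prop :=
  forall x y : F, 0 <=v x -> (forall n : nat, x *+ n <=v y) -> x = 0.

Definition pos_part (A : set F) : set F := A `&` [set f | 0 <=v f].

Definition principal_ideal (e : F) : set F :=
  [set f | exists2 l : R, 0 <= l & vabs f <=v l *: e].

(* ||g||_e <= eps, where ||g||_e = inf {l >= 0 : |g| <= l e}.  Since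
   e >= 0, the set {l >= 0 : |g| <= l e} is upward closed, so its infimum
   is <= eps (in particular the set is nonempty) iff it contains every
   l > eps. *)
Definition enorm_le (e g : F) (eps : R) : Prop :=
  forall l : R, eps < l -> vabs g <=v l *: e.

Definition directed (I : Type) (le : I -> I -> Prop) : Prop :=
  [/\ (exists i : I, True), (forall i, le i i),
      (forall i j k, le i j -> le j k -> le i k)
    & (forall i j, exists k, le i k /\ le j k)].

Definition uconv (I : Type) (le : I -> I -> Prop) (x : I -> F) (f : F) : Prop :=
  exists e : F, [/\ 0 <=v e, principal_ideal e f &
    forall eps : R, 0 < eps ->
      exists i0 : I, forall i, le i0 i -> enorm_le e (x i - f) eps].

Definition uconv_seq (u : nat -> F) (f : F) : Prop :=
  uconv (fun m n : nat => (m <= n)%N) u f.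

Definition adherence (E : set F) : set F :=
  [set f | exists (I : Type) (le : I -> I -> Prop) (x : I -> F),
      [/\ directed le, (forall i, E (x i)) & uconv le x f]].

Definition uclosed (A : set F) : Prop := adherence A = A.

Definition uclosure (E : set F) : set F :=
  [set f | forall C : set F, E `<=` C -> uclosed C -> C f].

Definition vector_sublattice (E : set F) : Prop :=
  [/\ E 0, (forall x y, E x -> E y -> E (x + y)),
      (forall (a : R) x, E x -> E (a *: x)),
      (forall x y, E x -> E y -> E (vmeet L x y))
    & (forall x y, E x -> E y -> E (vjoin L x y))].

Definition majorizing (E : set F) : Prop :=
  forall f : F, 0 <=v f -> exists2 e, E e & f <=v e.

Definition is_sup_in (A G : set F) (f : F) : Prop :=
  [/\ A f, (forall g, G g -> g <=v f)
    & (forall h, A h -> (forall g, G g -> g <=v h) -> f <=v h)].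

Definition increasing_seq (u : nat -> F) : Prop := forall n, u n <=v u n.+1.

End VL.

(* Main.v *)
Require Import Defs.
From mathcomp Require Import all_boot all_order all_algebra.
From mathcomp Require Import boolp classical_sets cardinality reals.
Import Order.TTheory GRing.Theory Num.Theory.
Local Open Scope classical_set_scope.
Local Open Scope ring_scope.

Lemma vl_addl {R : realType} {F : lmodType R} {L : vector_lattice F} [x y] z :
  vle L x y -> vle L (z + x) (z + y).
Proof. by move=> h; rewrite ![z + _]addrC; apply: vle_add. Qed.

Lemma vl_add2 {R : realType} {F : lmodType R} {L : vector_lattice F} [x y z w] :
  vle L x y -> vle L z w -> vle L (x + z) (y + w).
Proof.
move=> h1 h2; apply: (vle_trans (vle_add _ h1)); exact: vl_addl.
Qed.

Lemma vl_subge0 {R : realType} {F : lmodType R} (L : vector_lattice F) x y :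
  vle L x y <-> vle L 0 (y - x).
Proof.
split=> h.
  by have := vle_add (- x) h; rewrite subrr.
by have := vle_add x h; rewrite add0r subrK.
Qed.

Lemma vl_opp {R : realType} {F : lmodType R} {L : vector_lattice F} [x y] :
  vle L x y -> vle L (- y) (- x).
Proof. by move=> /vl_subge0 h; apply/vl_subge0; rewrite opprK addrC. Qed.

Lemma vl_scale {R : realType} {F : lmodType R} {L : vector_lattice F} [a : R] [x y] :
  0 <= a -> vle L x y -> vle L (a *: x) (a *: y).
Proof.
move=> a0 /vl_subge0 h; apply/vl_subge0; rewrite -scalerBr; exact: vle_scale.
Qed.

Lemma vl_scalel {R : realType} {F : lmodType R} {L : vector_lattice F} [a b : R] [e] :
  a <= b -> vle L 0 e -> vle L (a *: e) (b *: e).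
Proof.
move=> ab e0; apply/vl_subge0; rewrite -scalerBl; apply: vle_scale => //.
by rewrite subr_ge0.
Qed.

Lemma vabs_ge {R : realType} {F : lmodType R} (L : vector_lattice F) x :
  vle L x (vabs L x) /\ vle L (- x) (vabs L x).
Proof. split; [exact: vjoin_ubl | exact: vjoin_ubr]. Qed.

Lemma vabs_ge0 {R : realType} {F : lmodType R} (L : vector_lattice F) x :
  vle L 0 (vabs L x).
Proof.
have [h1 h2] := vabs_ge L x.
have := vl_add2 h1 h2; rewrite subrr => h.
have h2' : (0:R) <= 2^-1 by rewrite invr_ge0.
have := vl_scale h2' h; rewrite scaler0 -[X in _ + X]scale1r.
by rewrite -{1}[vabs L x]scale1r -scalerDl scalerA mulVf ?pnatr_eq0 // scale1r.
Qed.

Lemma vabs_le {R : realType} {F : lmodType R} {L : vector_lattice F} [x c] :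
  vle L x c -> vle L (- x) c -> vle L (vabs L x) c.
Proof. exact: vjoin_least. Qed.

Lemma vl_arch {R : realType} {F : lmodType R} {L : vector_lattice F} [x y e] :
  archimedean_vl L -> vle L 0 e ->
  (forall eps : R, 0 < eps -> vle L x (y + eps *: e)) -> vle L x y.
Proof.
move=> arch e0 h.
set d := x - y; set p := vjoin L d 0.
have hp : forall eps : R, 0 < eps -> vle L p (eps *: e).
  move=> eps eps0; apply: vjoin_least; last by apply: vle_scale => //; exact: ltW.
  rewrite /d; have := vle_add (- y) (h _ eps0); by rewrite addrAC subrr add0r.
have p0 : p = 0.
  apply: arch (vjoin_ubr L d 0) _ => n.
  case: n => [|n]; first by rewrite mulr0n; exact: e0.
  have hn : (0:R) < n.+1%:R by rewrite ltr0n.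
  have := vl_scale (ltW hn) (hp (n.+1%:R)^-1 ltac:(by rewrite invr_gt0)).
  by rewrite scaler_nat scalerA divff ?scale1r // gt_eqF.
have : vle L d 0 by rewrite -p0; exact: vjoin_ubl.
by move=> hd; apply/vl_subge0; move/vl_subge0: hd; rewrite sub0r /d opprB.
Qed.

Lemma vabs_bound {R : realType} {F : lmodType R} {L : vector_lattice F} [g c] :
  vle L (vabs L g) c -> vle L g c /\ vle L (- g) c.
Proof.
move=> h; have [h1 h2] := vabs_ge L g.
by split; apply: vle_trans h.
Qed.

Lemma vabs_sub_bound {R : realType} {F : lmodType R} {L : vector_lattice F} [x f c] :
  vle L (vabs L (x - f)) c -> vle L x (f + c) /\ vle L f (x + c).
Proof.
move=> /vabs_bound [h1 h2]; split.
  by have := vle_add f h1; rewrite subrK addrC.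
by have := vle_add x h2; rewrite opprB subrK addrC.
Qed.

Definition delta {R : realType} (n : nat) : R := (n.+1%:R)^-1.

Lemma delta_gt0 {R : realType} n : 0 < delta (R:=R) n.
Proof. by rewrite /delta invr_gt0 ltr0n. Qed.

Lemma delta_small {R : realType} (eps : R) : 0 < eps ->
  exists N, forall n, (N <= n)%N -> 2 * delta n <= eps.
Proof.
move=> eps0.
have h0 : 0 <= 2 / eps by rewrite divr_ge0 // ltW.
exists (Num.Def.archi_bound (2 / eps)) => n hn.
have hb := archi_boundP h0.
rewrite /delta mulrC -/(_ / _) ler_pdivrMl ?ltr0n //.
rewrite ltr_pdivrMr // in hb.
apply: (le_trans (ltW hb)); rewrite ler_pM2r // ler_nat (leq_trans hn) //.
Qed.

Lemma uconv_pick {R : realType} {F : lmodType R} (L : vector_lattice F) (E : set F)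
  (I : Type) (le : I -> I -> Prop) (x : I -> F) (f : F) :
  majorizing L E -> directed le -> uconv L le x f ->
  exists e', exists i : nat -> I,
    [/\ E e', vle L 0 e', principal_ideal L e' f &
        forall n, vle L (vabs L (x (i n) - f)) (delta n *: e')].
Proof.
move=> maj [_ lrefl _ _] [e [e0 [l l0 hl] conv]].
have [e' Ee' ee'] := maj e e0.
have e'0 : vle L 0 e' := vle_trans e0 ee'.
have hn : forall n, exists i, vle L (vabs L (x i - f)) (delta n *: e').
  move=> n.
  have hd : 0 < delta (R:=R) n / 2 by rewrite divr_gt0 // delta_gt0.
  have [i0 hi0] := conv _ hd.
  exists i0; have := hi0 i0 (lrefl i0) (delta n) _.
  move=> /(_ _) h; apply: vle_trans (h _) _.
    by rewrite ltr_pdivrMr // ltr_pMr ?delta_gt0 // ltr1n.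
  by apply: vl_scale ee'; exact: ltW (delta_gt0 n).
have [i hi] := choice hn.
exists e', i; split => //.
exists l => //; apply: vle_trans hl _; exact: vl_scale ee'.
Qed.

Lemma delta_small2 {R : realType} (eps : R) : 0 < eps ->
  exists N, forall n, (N <= n)%N -> delta n + delta n <= eps.
Proof.
move=> /delta_small [N hN]; exists N => n /hN.
by move=> h; apply: le_trans h; rewrite mulr2n mulrDl mul1r.
Qed.

Fixpoint jseq {R : realType} {F : lmodType R} (L : vector_lattice F)
  (y : nat -> F) (n : nat) : F :=
  match n with 0 => y 0%N | m.+1 => vjoin L (jseq L y m) (y m.+1) end.

Lemma part1 {R : realType} {F : lmodType R} (L : vector_lattice F) (E : set F) :
  archimedean_vl L -> vector_sublattice L E -> majorizing L E ->
  forall f, pos_part L (adherence L E) f ->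
         exists u : nat -> F,
           [/\ (forall n, [/\ E (u n), vle L 0 (u n) & vle L (u n) f]),
               increasing_seq L u, uconv_seq L u f
             & is_sup_in L setT (range u) f].
Proof.
move=> arch [E0 Eadd Escale Emeet Ejoin] maj f [[I [le [x [dir xE conv]]]] f0].
have [e' [i [Ee' e'0 pf hb]]] := @uconv_pick _ _ L E _ _ _ _ maj dir conv.
pose y n := vjoin L (x (i n) - delta n *: e') 0.
have Ey n : E (y n).
  apply: Ejoin E0; apply: Eadd (xE _) _; rewrite -scaleNr; exact: Escale.
have y0 n : vle L 0 (y n) by exact: vjoin_ubr.
have yf n : vle L (y n) f.
  apply: vjoin_least f0.
  have [h _] := vabs_sub_bound (hb n).
  by have := vle_add (- (delta n *: e')) h; rewrite addrK.
have fy n : vle L f (y n + (delta n + delta n) *: e').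
  have [_ h] := vabs_sub_bound (hb n).
  apply: vle_trans h _; rewrite scalerDl addrA.
  have := vle_add (delta n *: e') (vle_add (delta n *: e') (vjoin_ubl L (x (i n) - delta n *: e') 0)).
  by rewrite subrK.
pose u := jseq L y.
have Eu n : E (u n) by elim: n => [|n IH] /=; [exact: Ey | exact: Ejoin].
have yu n : vle L (y n) (u n) by case: n => [|n] /=; [exact: vle_refl | exact: vjoin_ubr].
have uf n : vle L (u n) f by elim: n => [|n IH] /=; [exact: yf | exact: vjoin_least].
have fu n : vle L f (u n + (delta n + delta n) *: e').
  apply: vle_trans (fy n) _; exact: vle_add.
exists u; split.
- move=> n; split => //; exact: vle_trans (y0 n) (yu n).
- move=> n; exact: vjoin_ubl.
- exists e'; split => // eps eps0.
  have [N hN] := delta_small2 _ eps0.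
  exists N => n hn l hl.
  have l0 : 0 < l := lt_trans eps0 hl.
  apply: vabs_le.
    apply: vle_trans (vle_scale (ltW l0) e'0).
    by have := vle_add (- f) (uf n); rewrite subrr.
  rewrite opprB.
  apply: vle_trans (vl_scalel (le_trans (hN n hn) (ltW hl)) e'0).
  by have := vle_add (- u n) (fu n); rewrite addrAC subrr add0r.
- split => //.
    by move=> g [n _ <-].
  move=> h _ hub; apply: (vl_arch arch e'0) => eps eps0.
  have [N hN] := delta_small2 _ eps0.
  apply: vle_trans (fu N) _; apply: vl_add2.
    by apply: hub; exists N.
  exact: vl_scalel (hN N (leqnn N)) e'0.
Qed.

Definition Sset {R : realType} {F : lmodType R} (L : vector_lattice F) (E : set F) : set F :=
  fun f => exists G : set F, [/\ countable G, G `<=` E & is_sup_in L setT G f].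

Lemma S_closed {R : realType} {F : lmodType R} (L : vector_lattice F) (E : set F) :
  archimedean_vl L -> vector_sublattice L E -> majorizing L E ->
  uclosed L (Sset L E).
Proof.
move=> arch [E0 Eadd Escale Emeet Ejoin] maj.
apply/seteqP; split => f.
  move=> [I [le [x [dir xS conv]]]].
  have [e' [i [Ee' e'0 pf hb]]] := @uconv_pick _ _ L E _ _ _ _ maj dir conv.
  have [G hG] := choice (fun n => xS (i n)).
  pose H := \bigcup_(n in setT) [set g - delta n *: e' | g in G n].
  exists H; split.
  - apply: bigcup_countable => // n _.
    apply: sub_countable (card_image_le _ _) _.
    by have [] := hG n.
  - move=> z [n _ [g Gg <-]]; have [_ GE _] := hG n.
    apply: Eadd (GE _ Gg) _; rewrite -scaleNr; exact: Escale.
  - split => //.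
      move=> z [n _ [g Gg <-]]; have [_ _ [_ ub _]] := hG n.
      have [h _] := vabs_sub_bound (hb n).
      have := vle_add (- (delta n *: e')) (vle_trans (ub _ Gg) h).
      by rewrite addrK.
    move=> h _ hub; apply: (vl_arch arch e'0) => eps eps0.
    have [N hN] := delta_small2 _ eps0.
    have [_ _ [_ _ least]] := hG N.
    have xh : vle L (x (i N)) (h + delta N *: e').
      apply: least => // g Gg.
      have := vle_add (delta N *: e') (hub (g - delta N *: e') _).
      rewrite subrK; apply.
      by exists N => //; exists g.
    have [_ fx] := vabs_sub_bound (hb N).
    apply: vle_trans fx _; apply: vle_trans (vle_add (delta N *: e') xh) _.
    rewrite -addrA -scalerDl; apply: vl_addl.
    exact: vl_scalel (hN N (leqnn N)) e'0.
move=> Sf.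
exists unit, (fun _ _ => True), (fun _ => f); split => //.
exists (vabs L f); split; first exact: vabs_ge0.
  exists 1 => //; rewrite scale1r; exact: vle_refl.
move=> eps eps0; exists tt => _ _ l hl.
have l0 : 0 < l := lt_trans eps0 hl.
have h0 : vle L 0 (l *: vabs L f) by apply: vle_scale (ltW l0) (vabs_ge0 L f).
by rewrite subrr; apply: vabs_le => //; rewrite oppr0.
Qed.

Lemma E_sub_S {R : realType} {F : lmodType R} (L : vector_lattice F) (E : set F) :
  E `<=` Sset L E.
Proof.
move=> g Eg; exists [set g]; split => //.
  by move=> z ->.
split => //.
  by move=> z ->; exact: vle_refl.
by move=> h _ hub; apply: hub.
Qed.

Theorem proposition11p3 (R : realType) (F : lmodType R)
    (L : vector_lattice F) (E : set F) :
  archimedean_vl L -> vector_sublattice L E -> majorizing L E ->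
  [/\ (forall f, pos_part L (adherence L E) f ->
         exists u : nat -> F,
           [/\ (forall n, [/\ E (u n), vle L 0 (u n) & vle L (u n) f]),
               increasing_seq L u, uconv_seq L u f
             & is_sup_in L setT (range u) f]),
      (forall f, pos_part L (adherence L E) f <->
         exists u : nat -> F,
           [/\ (forall n, pos_part L E (u n)), increasing_seq L u
             & uconv_seq L u f])
    & (forall f, pos_part L (uclosure L E) f ->
         exists G : set F,
           [/\ countable G, G `<=` E & is_sup_in L (uclosure L E) G f])].
Proof.
move=> arch subl maj.
have P1 := part1 L E arch subl maj.
split => //.
- move=> f; split.
    move=> /P1 [u [hu inc conv _]]; exists u; split => // n.
    by have [] := hu n; split.
  move=> [u [uE _ conv]]; split.
    exists nat, (fun m n => (m <= n)%N), u; split => //.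
      rewrite /directed; split; [by exists 0%N | by [] | | ].
        by move=> i j k; exact: leq_trans.
      by move=> i j; exists (maxn i j); rewrite leq_maxl leq_maxr.
    by move=> i; have [] := uE i.
  have [e [e0 _ c]] := conv.
  rewrite /=; apply: (vl_arch (y := f) arch e0) => eps eps0.
  have [i0 h] := c (eps / 2) ltac:(by rewrite divr_gt0).
  have := h i0 (leqnn i0) eps ltac:(by rewrite ltr_pdivrMr // ltr_pMr // ltr1n).
  move=> /vabs_sub_bound [h1 _].
  have [_ u0] := uE i0.
  exact: vle_trans u0 h1.
- move=> f [Cf f0].
  have [G [cG GE [_ ub least]]] := Cf (Sset L E) (E_sub_S L E) (S_closed L E arch subl maj).
  exists G; split => //; split => // h _ hh; exact: least.
Qed.
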